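(* Let $n\geq1$. In the monoid $\Sigma_n$ and in the monoid $\mathcal{H}_n^+$, any two elements $x,y$ admit both a common right-multiple and a common left-multiple.
   Context: $\mathcal{H}_n^+$ is the monoid with generators $\rho_1,\dots,\rho_n$ and relations $\rho_1\rho_j\rho_i=\rho_{i+1}\rho_j$ for $1\leq i<j\leq n$. $\Sigma_n$ is the submonoid of the braid group $\mathcal{B}_{n+1}$ (standard Artin generators $\sigma_1,\dots,\sigma_n$) generated by $\sigma_1,\ \sigma_1\sigma_2,\ \dots,\ \sigma_1\sigma_2\cdots\sigma_n$. A common right-multiple of $x,y$ is an element $xa=yb$; a common left-multiple is an element $ax=by$. *)

(* Defs.v *)
From mathcomp Require Import all_boot.
Set Implicit Arguments. Unset Strict Implicit. Unset Printing Implicit Defensive.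

Inductive cong_gen (A : Type) (R : seq A -> seq A -> Prop) : seq A -> seq A -> Prop :=
| cg_refl w : cong_gen R w w
| cg_sym u v : cong_gen R u v -> cong_gen R v u
| cg_trans u v w : cong_gen R u v -> cong_gen R v w -> cong_gen R u w
| cg_step p q u v : R u v -> cong_gen R (p ++ u ++ q) (p ++ v ++ q).

Definition Hword (n : nat) (w : seq nat) : Prop := all (fun k => (1 <= k <= n)%N) w.

Inductive Hrel (n : nat) : seq nat -> seq nat -> Prop :=
| Hrel_def i j : (1 <= i)%N -> (i < j)%N -> (j <= n)%N -> Hrel n [:: 1; j; i] [:: i.+1; j].

Definition Heq (n : nat) := cong_gen (Hrel n).

(* ---------- braid group B_{n+1}: generators sigma_1..sigma_n ----------
   a letter (true, i) is sigma_i, (false, i) is sigma_i^{-1}. *)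
Definition bletter := (bool * nat)%type.

Inductive Brel (n : nat) : seq bletter -> seq bletter -> Prop :=
| Brel_inv1 i : (1 <= i <= n)%N -> Brel n [:: (true, i); (false, i)] [::]
| Brel_inv2 i : (1 <= i <= n)%N -> Brel n [:: (false, i); (true, i)] [::]
| Brel_comm i j : (1 <= i <= n)%N -> (1 <= j <= n)%N -> (i.+1 < j)%N ->
    Brel n [:: (true, i); (true, j)] [:: (true, j); (true, i)]
| Brel_braid i : (1 <= i)%N -> (i.+1 <= n)%N ->
    Brel n [:: (true, i); (true, i.+1); (true, i)] [:: (true, i.+1); (true, i); (true, i.+1)].

Definition Beq (n : nat) := cong_gen (Brel n).

Definition delta (k : nat) : seq bletter := map (fun i => (true, i)) (iota 1 k).

Definition Sigma_word (n : nat) (w : seq bletter) : Prop :=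
  exists ks : seq nat, all (fun k => (1 <= k <= n)%N) ks /\ w = flatten (map delta ks).

(* Main.v *)
Require Import Defs.
From mathcomp Require Import all_boot zify.
From Stdlib Require Import Lia.
Set Implicit Arguments. Unset Strict Implicit. Unset Printing Implicit Defensive.

Lemma cg_ctx (A : Type) (R : seq A -> seq A -> Prop) p q u v :
  cong_gen R u v -> cong_gen R (p ++ u ++ q) (p ++ v ++ q).
Proof.
move=> h; elim: h p q => [w|u' v' _ IH|u' v' w' _ IH1 _ IH2|p' q' u' v' H] p q.
- exact: cg_refl.
- exact: cg_sym.
- exact: cg_trans (IH1 p q) (IH2 p q).
- by have := cg_step (p ++ p') (q' ++ q) H; rewrite !catA.
Qed.

Lemma cg_catl (A : Type) (R : seq A -> seq A -> Prop) p u v :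
  cong_gen R u v -> cong_gen R (p ++ u) (p ++ v).
Proof. by move=> h; have := cg_ctx p [::] h; rewrite !cats0. Qed.

Lemma cg_catr (A : Type) (R : seq A -> seq A -> Prop) q u v :
  cong_gen R u v -> cong_gen R (u ++ q) (v ++ q).
Proof. by move=> h; have := cg_ctx [::] q h. Qed.

Lemma cg_cat (A : Type) (R : seq A -> seq A -> Prop) u u' v v' :
  cong_gen R u u' -> cong_gen R v v' -> cong_gen R (u ++ v) (u' ++ v').
Proof. by move=> h1 h2; apply: cg_trans (cg_catr _ h1) (cg_catl _ h2). Qed.

Lemma cg_rel (A : Type) (R : seq A -> seq A -> Prop) u v :
  R u v -> cong_gen R u v.
Proof. by move=> h; have := cg_step [::] [::] h; rewrite /= !cats0. Qed.

Lemma HL n k i : 1 <= k -> 1 <= i -> i + k <= n ->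
  Heq n (k :: nseq k n ++ [:: i]) ((i + k) :: nseq k n).
Proof.
elim: k i => // k IH i _ hi hik.
case: k IH hik => [_ hik | k IH hik].
  by rewrite addn1; apply: cg_rel; apply: Hrel_def => //; lia.
have h1 : Heq n [:: k.+2; n] [:: 1; n; k.+1].
  by apply: cg_sym; apply: cg_rel; apply: Hrel_def => //; lia.
have h2 := IH i isT hi ltac:(lia).
have h3 : Heq n [:: 1; n; i + k.+1] [:: i + k.+2; n].
  by rewrite (_ : i + k.+2 = (i + k.+1).+1); [apply: cg_rel; apply: Hrel_def => //; lia | lia].
apply: cg_trans (cg_catr (nseq k.+1 n ++ [:: i]) h1) _.
apply: cg_trans (cg_catl [:: 1; n] h2) _.
exact: (cg_catr (nseq k.+1 n) h3).
Qed.

Lemma nseq_rc (T : Type) m (x : T) : x :: nseq m x = nseq m x ++ [:: x].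
Proof. by elim: m => //= m <-. Qed.

Lemma Zcentral n g : 1 <= g <= n ->
  Heq n (g :: nseq n.+1 n) (nseq n.+1 n ++ [:: g]).
Proof.
case/andP=> g1 gn.
case: (ltngtP g n) gn => // [gn _ | ->]; last first.
  by have := nseq_rc n.+1 n => -> _; apply: cg_refl.
have L1 := @HL n (n - g) g ltac:(lia) g1 ltac:(lia).
have L2 := @HL n g (n - g) g1 ltac:(lia) ltac:(lia).
rewrite (_ : g + (n - g) = n) in L1; last lia.
rewrite (_ : n - g + g = n) in L2; last lia.
have E : nseq n.+1 n = nseq g n ++ n :: nseq (n - g) n.
  by rewrite {1}(_ : n.+1 = g + (n - g).+1) ?nseqD //; lia.
rewrite E -cat_cons.
apply: cg_trans (cg_catl _ (cg_sym L1)) _.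
rewrite (_ : (g :: nseq g n) ++ (n - g) :: nseq (n - g) n ++ [:: g] =
   (g :: nseq g n ++ [:: n - g]) ++ nseq (n - g) n ++ [:: g]); last by rewrite /= -catA.
apply: cg_trans (cg_catr _ L2) _.
by have := nseq_rc g n => ->; rewrite -!catA; apply: cg_refl.
Qed.

Lemma Zpow_central n g m : 1 <= g <= n ->
  Heq n (g :: nseq (n.+1 * m) n) (nseq (n.+1 * m) n ++ [:: g]).
Proof.
move=> hg; elim: m => [|m IH]; first by rewrite muln0; apply: cg_refl.
rewrite mulnS nseqD -cat_cons.
apply: cg_trans (cg_catr _ (Zcentral hg)) _.
rewrite -catA; apply: cg_trans (cg_catl (nseq n.+1 n) IH) _; rewrite catA; exact: cg_refl.
Qed.

Definition cof n g := if g < n then nseq g n ++ (n - g) :: nseq (n - g) n else nseq n n.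

Lemma cof_word n g : 1 <= n -> Hword n (cof n g).
Proof.
move=> n1; rewrite /cof /Hword; case: ifP => hg.
  rewrite all_cat /= !all_nseq n1 leqnn /= !orbT /=; apply/andP; split; lia.
by rewrite all_nseq n1 leqnn orbT.
Qed.

Lemma cof_r n g : 1 <= g <= n -> Heq n (g :: cof n g) (nseq n.+1 n).
Proof.
case/andP=> g1 gn; rewrite /cof; case: ifP => hg; last first.
  have -> : g = n by lia.
  by apply: cg_refl.
have L2 := @HL n g (n - g) g1 ltac:(lia) ltac:(lia).
rewrite (_ : n - g + g = n) in L2; last lia.
rewrite (_ : g :: (nseq g n ++ (n - g) :: nseq (n - g) n) = (g :: nseq g n ++ [:: n - g]) ++ nseq (n - g) n); last by rewrite /= -catA.
apply: cg_trans (cg_catr _ L2) _.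
rewrite (_ : n.+1 = g.+1 + (n - g)); last lia.
by rewrite nseqD; apply: cg_refl.
Qed.

Lemma cof_l n g : 1 <= g <= n -> Heq n (cof n g ++ [:: g]) (nseq n.+1 n).
Proof.
case/andP=> g1 gn; rewrite /cof; case: ifP => hg; last first.
  have -> : g = n by lia.
  by rewrite -nseq_rc; apply: cg_refl.
have L1 := @HL n (n - g) g ltac:(lia) g1 ltac:(lia).
rewrite (_ : g + (n - g) = n) in L1; last lia.
rewrite -catA; apply: cg_trans (cg_catl _ L1) _.
rewrite (_ : n.+1 = g + (n - g).+1); last lia.
by rewrite nseqD; apply: cg_refl.
Qed.

Lemma Hright n x : 1 <= n -> Hword n x ->
  exists a, Hword n a /\ Heq n (x ++ a) (nseq (n.+1 * size x) n).
Proof.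
move=> n1; elim: x => [|g x IH].
  by move=> _; exists [::]; split => //; rewrite muln0; apply: cg_refl.
case/andP=> hg /IH [a [ha e]].
exists (a ++ cof n g); split; first by rewrite /Hword all_cat ha cof_word.
rewrite catA -cat1s -(catA [:: g]).
have t1 := cg_catr (cof n g) (cg_catl [:: g] e).
have t2 : Heq n (([:: g] ++ nseq (n.+1 * size x) n) ++ cof n g) ((nseq (n.+1 * size x) n ++ [:: g]) ++ cof n g).
  exact: cg_catr (Zpow_central (size x) hg).
apply: cg_trans t1 _; apply: cg_trans t2 _.
rewrite -catA (_ : n.+1 * size ([:: g] ++ x) = n.+1 * size x + n.+1); last by rewrite size_cat /=; lia.
rewrite nseqD; apply: cg_catl; exact: cof_r.
Qed.

Lemma Hleft n x : 1 <= n -> Hword n x ->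
  exists a, Hword n a /\ Heq n (a ++ x) (nseq (n.+1 * size x) n).
Proof.
move=> n1; elim/last_ind: x => [|x g IH].
  by move=> _; exists [::]; split => //; rewrite muln0; apply: cg_refl.
rewrite /Hword all_rcons => /andP [hg /IH [a [ha e]]].
exists (cof n g ++ a); split; first by rewrite /Hword all_cat ha cof_word.
rewrite -cats1 (_ : (cof n g ++ a) ++ x ++ [:: g] = cof n g ++ ((a ++ x) ++ [:: g])); last by rewrite -!catA.
have t1 := cg_catl (cof n g) (cg_catr [:: g] e).
have t2 : Heq n (cof n g ++ (nseq (n.+1 * size x) n ++ [:: g])) (cof n g ++ ([:: g] ++ nseq (n.+1 * size x) n)).
  exact: cg_catl (cg_sym (Zpow_central (size x) hg)).
apply: cg_trans t1 _; apply: cg_trans t2 _.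
rewrite catA (_ : n.+1 * size (x ++ [:: g]) = n.+1 + n.+1 * size x); last by rewrite size_cat /=; lia.
rewrite nseqD; apply: cg_catr; exact: cof_l.
Qed.

Lemma Hmain n : 1 <= n -> forall x y : seq nat, Hword n x -> Hword n y ->
     (exists a b, Hword n a /\ Hword n b /\ Heq n (x ++ a) (y ++ b)) /\
     (exists a b, Hword n a /\ Hword n b /\ Heq n (a ++ x) (b ++ y)).
Proof.
move=> n1 x y hx hy; split.
  have [a [ha ea]] := Hright n1 hx; have [b [hb eb]] := Hright n1 hy.
  exists (a ++ nseq (n.+1 * size y) n), (b ++ nseq (n.+1 * size x) n).
  have hz m : Hword n (nseq m n) by rewrite /Hword all_nseq n1 leqnn orbT.
  split; first by rewrite /Hword all_cat ha hz.
  split; first by rewrite /Hword all_cat hb hz.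
  rewrite !catA; apply: cg_trans (cg_catr _ ea) _.
  apply: cg_sym; apply: cg_trans (cg_catr _ eb) _.
  by rewrite -!nseqD addnC; apply: cg_refl.
have [a [ha ea]] := Hleft n1 hx; have [b [hb eb]] := Hleft n1 hy.
exists (nseq (n.+1 * size y) n ++ a), (nseq (n.+1 * size x) n ++ b).
have hz m : Hword n (nseq m n) by rewrite /Hword all_nseq n1 leqnn orbT.
split; first by rewrite /Hword all_cat ha hz.
split; first by rewrite /Hword all_cat hb hz.
rewrite -!catA; apply: cg_trans (cg_catl _ ea) _.
apply: cg_sym; apply: cg_trans (cg_catl _ eb) _.
by rewrite -!nseqD addnC; apply: cg_refl.
Qed.

Definition sw k l : seq bletter := map (fun i => (true, i)) (iota k l).

Lemma sw_rcons k l : sw k l.+1 = sw k l ++ [:: (true, k + l)].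
Proof. by rewrite /sw -addn1 iotaD map_cat. Qed.

Lemma sw_cat k l1 l2 : sw k (l1 + l2) = sw k l1 ++ sw (k + l1) l2.
Proof. by rewrite /sw iotaD map_cat. Qed.

Lemma comm_sw n k l m : 1 <= m <= n -> 1 <= k -> k + l <= n.+1 ->
  ((k + l).+1 <= m) || (m.+2 <= k) ->
  Beq n (sw k l ++ [:: (true, m)]) ((true, m) :: sw k l).
Proof.
move=> hm; elim: l k => [|l IH] k hk hkl hc; first exact: cg_refl.
rewrite /sw /= -/(sw k.+1 l).
have h1 := IH k.+1 isT ltac:(lia) ltac:(lia).
have h2 := cg_catl [:: (true, k)] h1.
apply: cg_trans h2 _.
have h3 : Beq n [:: (true, k); (true, m)] [:: (true, m); (true, k)].
  case/orP: hc => hc.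
    apply: cg_rel; apply: Brel_comm; lia.
  apply: cg_sym; apply: cg_rel; apply: Brel_comm; lia.
exact: (cg_catr (sw k.+1 l) h3).
Qed.

Lemma shift_sw n m j : 1 <= m -> m < j -> j <= n ->
  Beq n (sw 1 j ++ [:: (true, m)]) ((true, m.+1) :: sw 1 j).
Proof.
move=> m1 mj jn.
have E : sw 1 j = sw 1 (m - 1) ++ [:: (true, m); (true, m.+1)] ++ sw m.+2 (j - m - 1).
  rewrite (_ : j = (m - 1) + (2 + (j - m - 1))); last lia.
  rewrite sw_cat sw_cat (_ : 1 + (m - 1) = m); last lia.
  rewrite (_ : m - 1 + (2 + (j - m - 1)) - m - 1 = j - m - 1); last lia.
  by rewrite addn2.
rewrite E.
set A := sw 1 (m - 1); set B := sw m.+2 (j - m - 1).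
have c1 := @comm_sw n m.+2 (j - m - 1) m ltac:(lia) isT ltac:(lia) ltac:(lia).
rewrite -/B in c1.
have t1 := cg_catl (A ++ [:: (true, m); (true, m.+1)]) c1.
rewrite !catA -(catA A) in t1 *.
apply: cg_trans t1 _.
have br : Beq n [:: (true, m); (true, m.+1); (true, m)] [:: (true, m.+1); (true, m); (true, m.+1)].
  by apply: cg_rel; apply: Brel_braid; lia.
have t2 := cg_ctx A B br.
have e1 : (A ++ [:: (true, m); (true, m.+1)]) ++ (true, m) :: B =
          A ++ [:: (true, m); (true, m.+1); (true, m)] ++ B by rewrite -catA.
rewrite e1; apply: cg_trans t2 _.
have c2 := @comm_sw n 1 (m - 1) m.+1 ltac:(lia) isT ltac:(lia) ltac:(lia).
rewrite -/A in c2.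
have t3 := cg_catr ([:: (true, m); (true, m.+1)] ++ B) c2.
have e2 : A ++ [:: (true, m.+1); (true, m); (true, m.+1)] ++ B =
   (A ++ [:: (true, m.+1)]) ++ [:: (true, m); (true, m.+1)] ++ B by rewrite -catA.
rewrite e2; apply: cg_trans t3 _.
exact: cg_refl.
Qed.

Lemma conj_sw n i j : i < j -> j <= n ->
  Beq n (sw 1 j ++ sw 1 i) (sw 2 i ++ sw 1 j).
Proof.
move=> ij jn; elim: i ij => [|i IH] ij.
  by rewrite /= cats0; apply: cg_refl.
have h1 := IH (ltnW ij).
rewrite sw_rcons catA.
apply: cg_trans (cg_catr _ h1) _.
rewrite -catA.
have h2 := @shift_sw n (1 + i) j ltac:(lia) ltac:(lia) jn.
apply: cg_trans (cg_catl _ h2) _.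
rewrite sw_rcons -catA add1n addSn; exact: cg_refl.
Qed.

Definition phi (w : seq nat) : seq bletter := flatten (map delta w).

Lemma phi_cat u v : phi (u ++ v) = phi u ++ phi v.
Proof. by rewrite /phi map_cat flatten_cat. Qed.

Lemma Heq_Beq n u v : Heq n u v -> Beq n (phi u) (phi v).
Proof.
elim=> [w|u' v' _ IH|u' v' w' _ IH1 _ IH2|p q u' v' H].
- exact: cg_refl.
- exact: cg_sym.
- exact: cg_trans IH1 IH2.
- rewrite !phi_cat; apply: cg_ctx.
  case: H => i j i1 ij jn.
  rewrite /phi /= !cats0.
  have := conj_sw ij jn.
  move=> h.
  exact: (cg_catl [:: (true, 1)] h).
Qed.

Theorem lemma5p4 (n : nat) (hn : (1 <= n)%N) :
  (forall x y : seq bletter, Sigma_word n x -> Sigma_word n y ->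
     (exists a b, Sigma_word n a /\ Sigma_word n b /\ Beq n (x ++ a) (y ++ b)) /\
     (exists a b, Sigma_word n a /\ Sigma_word n b /\ Beq n (a ++ x) (b ++ y))) /\
  (forall x y : seq nat, Hword n x -> Hword n y ->
     (exists a b, Hword n a /\ Hword n b /\ Heq n (x ++ a) (y ++ b)) /\
     (exists a b, Hword n a /\ Hword n b /\ Heq n (a ++ x) (b ++ y))).
Proof.
split; last exact: Hmain.
move=> x y [ks [hks ->]] [ls [hls ->]].
have [[a [b [ha [hb e]]]] [c [d [hc [hd f]]]]] := Hmain hn hks hls.
split.
  exists (phi a), (phi b); split; first by exists a.
  split; first by exists b.
  by have := Heq_Beq e; rewrite !phi_cat.
exists (phi c), (phi d); split; first by exists c.
split; first by exists d.
by have := Heq_Beq f; rewrite !phi_cat.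
Qed.
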